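(* Let $\mathcal{E}=\{|\varphi_i\rangle,p_i\}_{i\in\mathcal I}$ be a finite pure-state ensemble with $m=|\mathcal I|$ states, and let $R\ge0$. Then in the definition of $M(\mathcal{E},R)$ it suffices to consider conditional distributions $p(j|i)$ with at most $m+1$ values of $j$. That is, $M(\mathcal{E},R)$ equals the infimum of $S(A:B|C)$ over conditional distributions with $|\mathcal J|\le m+1$ and $S(A:C)\le R$.
   Context: Let $\varphi_i=|\varphi_i\rangle\langle\varphi_i|$ be pure states on $\mathbb{C}^d$. For a finite set $\mathcal J$ and conditional distribution $p(j|i)$, let $\rho^{ABC}=\sum_ip_i|i\rangle\langle i|\otimes\varphi_i\otimes\sum_jp(j|i)|j\rangle\langle j|$ with orthonormal $\{|i\rangle\}$ and $\{|j\rangle\}$. Define $S(A:C)=S(A)+S(C)-S(AC)$ and $S(A:B|C)=S(AC)+S(BC)-S(ABC)-S(C)$ (von Neumann entropies, base 2). $M(\mathcal{E},R)=\inf\{S(A:B|C):S(A:C)\le R\}$ over all finite $\mathcal J$ and all conditional distributions. *)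

(* Defs.v *)
From HB Require Import structures.
From mathcomp Require Import all_boot all_order all_algebra.
From mathcomp Require Import complex.
From mathcomp Require Import all_classical all_reals all_analysis.

Set Implicit Arguments.
Unset Strict Implicit.
Unset Printing Implicit Defensive.

Import Order.TTheory GRing.Theory Num.Theory.
Local Open Scope ring_scope.
Local Open Scope complex_scope.

Definition eta2 {R : realType} (x : R) : R :=
  if x <= 0 then 0 else - x * (ln x / ln 2).

(* The eigenvalues (with multiplicity) of a square complex matrix:
   a sequence s with char_poly A = prod_(z in s) (X - z). Such an s exists
   since R[i] is algebraically closed, and it is unique up to permutation. *)
Definition spectrum {R : realType} {k : nat} (A : 'M[R[i]]_k) : seq R[i] :=
  xget [::] (fun s => char_poly A = \prod_(z <- s) ('X - z%:P)).

(* von Neumann entropy (base 2) S(A) = - tr A log2 A = sum_k -l_k log2 l_k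
   over the eigenvalues l_k (real for density matrices). *)
Definition vN_entropy {R : realType} {k : nat} (A : 'M[R[i]]_k) : R :=
  \sum_(z <- spectrum A) eta2 (complex.Re z).

(* An operator on C^T, T a finite index type (orthonormal basis {|t>}),
   given by its matrix entries <x| rho |y>. *)
Definition op_mx {R : realType} {T : finType} (f : T -> T -> R[i])
  : 'M[R[i]]_#|T| := \matrix_(a, b) f (enum_val a) (enum_val b).

Definition Sop {R : realType} {T : finType} (f : T -> T -> R[i]) : R :=
  vN_entropy (op_mx f).

(* rho^{ABC} = sum_i p_i |i><i| (x) phi_i (x) sum_j p(j|i) |j><j|,
   on C^m (x) C^d (x) C^n, indices (i, b, j). *)
Definition rhoABC {R : realType} {m d n : nat} (p : 'I_m -> R)
  (phi : 'I_m -> 'I_d -> R[i]) (q : 'I_m -> 'I_n -> R)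
  (x y : 'I_m * 'I_d * 'I_n) : R[i] :=
  if (x.1.1 == y.1.1) && (x.2 == y.2) then
    (p x.1.1 * q x.1.1 x.2)%:C * (phi x.1.1 x.1.2 * (phi x.1.1 y.1.2)^* )
  else 0.

Section Reduced.
Context {R : realType} {m d n : nat}.
Variable rho : 'I_m * 'I_d * 'I_n -> 'I_m * 'I_d * 'I_n -> R[i].

Definition ptrA (x y : 'I_m) : R[i] :=
  \sum_(b : 'I_d) \sum_(j : 'I_n) rho (x, b, j) (y, b, j).
Definition ptrC (x y : 'I_n) : R[i] :=
  \sum_(i : 'I_m) \sum_(b : 'I_d) rho (i, b, x) (i, b, y).
Definition ptrAC (x y : 'I_m * 'I_n) : R[i] :=
  \sum_(b : 'I_d) rho (x.1, b, x.2) (y.1, b, y.2).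
Definition ptrBC (x y : 'I_d * 'I_n) : R[i] :=
  \sum_(i : 'I_m) rho (i, x.1, x.2) (i, y.1, y.2).
End Reduced.

Definition mutinfAC {R : realType} {m d n : nat} (p : 'I_m -> R)
  (phi : 'I_m -> 'I_d -> R[i]) (q : 'I_m -> 'I_n -> R) : R :=
  let rho := rhoABC p phi q in
  Sop (ptrA rho) + Sop (ptrC rho) - Sop (ptrAC rho).

Definition condmutinfABgC {R : realType} {m d n : nat} (p : 'I_m -> R)
  (phi : 'I_m -> 'I_d -> R[i]) (q : 'I_m -> 'I_n -> R) : R :=
  let rho := rhoABC p phi q in
  Sop (ptrAC rho) + Sop (ptrBC rho) - Sop rho - Sop (ptrC rho).

Definition cond_distr {R : realType} {m n : nat} (q : 'I_m -> 'I_n -> R) :=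
  (forall i j, 0 <= q i j) /\ (forall i, \sum_(j : 'I_n) q i j = 1).

Definition M_E {R : realType} {m d : nat} (p : 'I_m -> R)
  (phi : 'I_m -> 'I_d -> R[i]) (Rate : R) : \bar R :=
  ereal_inf [set x : \bar R | exists (n : nat) (q : 'I_m -> 'I_n -> R),
    [/\ cond_distr q, mutinfAC p phi q <= Rate &
        x = (condmutinfABgC p phi q)%:E]].

(* Main.v *)
Require Import Defs.
From HB Require Import structures.
From mathcomp Require Import all_boot all_order all_algebra all_fingroup.
From mathcomp Require Import complex.
From mathcomp Require Import all_classical all_reals all_analysis.
From mathcomp Require Import ring lra.
Import Order.TTheory GRing.Theory Num.Theory.
Local Open Scope ring_scope.
Local Open Scope complex_scope.
Set Implicit Arguments.
Unset Strict Implicit.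
Unset Printing Implicit Defensive.


Section DetSub.
Variable R : comNzRingType.

Lemma det_conj_perm n (s : 'S_n) (B : 'M[R]_n) :
  \det (\matrix_(x, y) B (s x) (s y)) = \det B.
Proof.
have -> : \matrix_(x, y) B (s x) (s y) = row_perm s (col_perm s B).
  by apply/matrixP => x y; rewrite !mxE.
rewrite row_permE col_permE !det_mulmx !det_perm odd_permV.
by rewrite mulrCA -signr_addb addbb expr0 mulr1.
Qed.

Lemma det_castmx n m (e : n = m) (A : 'M[R]_n) : \det (castmx (e, e) A) = \det A.
Proof. by case: m / e. Qed.

Lemma det_sub N k (B : 'M[R]_N) (h : 'I_k -> 'I_N) : injective h ->
  (forall x y, x \notin codom h -> B x y = (x == y)%:R) ->
  (forall x y, y \notin codom h -> B x y = (x == y)%:R) ->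
  \det B = \det (\matrix_(a, b) B (h a) (h b)).
Proof.
move=> hi Bx By.
case: N B h hi Bx By => [|N] B h hi Bx By.
  by case: k h hi Bx By => [|k] h *; [rewrite !det_mx00 | case: (h ord0)].
pose c := enum [predC codom h].
have cu : uniq c by apply: enum_uniq.
have kle : (k <= N.+1)%N.
  by have := max_card (mem (codom h)); rewrite card_codom // !card_ord.
have sc : size c = (N.+1 - k)%N.
  rewrite /c -cardE; have := cardC (mem (codom h)).
  by rewrite card_codom // !card_ord => /(congr1 (subn^~ k)); rewrite addKn => <-.
have ek : (k + (N.+1 - k) = N.+1)%N by rewrite subnKC.
pose g' (u : 'I_k + 'I_(N.+1 - k)) : 'I_N.+1 :=
  match u with inl a => h a | inr b => nth ord0 c b end.
have cn (b : 'I_(N.+1 - k)) : nth ord0 c b \notin codom h.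
  have : nth ord0 c b \in c by rewrite mem_nth // sc.
  by rewrite mem_enum.
have g'i : injective g'.
  case=> [a|b] [a'|b'] /=.
  - by move/hi ->.
  - by move=> e; have := cn b'; rewrite -e codom_f.
  - by move=> e; have := cn b; rewrite e codom_f.
  - move=> /eqP; rewrite nth_uniq ?sc // => /eqP e.
    by congr inr; apply: val_inj.
pose sig := fun x : 'I_N.+1 => g' (fintype.split (cast_ord (esym ek) x)).
have sigi : injective sig.
  move=> x y /g'i /(can_inj (@splitK _ _)); exact: cast_ord_inj.
pose s := perm sigi.
rewrite -(det_conj_perm s B) -(det_castmx (esym ek)).
have -> : castmx (esym ek, esym ek) (\matrix_(x, y) B (s x) (s y)) =
   block_mx (\matrix_(a, b) B (h a) (h b)) 0 0 1%:M.
  apply/matrixP => i j; rewrite castmxE !mxE !permE /sig /=.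
  have cK (e1 e2 : (k + (N.+1 - k))%N = N.+1) x : cast_ord (esym e1) (cast_ord (esym (esym e2)) x) = x by apply: val_inj.
  rewrite !cK.
  case: (fintype.split i) => a; rewrite !mxE; case: (fintype.split j) => b; rewrite ?mxE //=.
  - by rewrite By ?cn //; case: eqP => // e; have := cn b; rewrite -e codom_f.
  - by rewrite Bx ?cn //; case: eqP => // e; have := cn a; rewrite e codom_f.
  - by rewrite Bx ?cn // nth_uniq ?sc.
by rewrite det_ublock det1 mulr1.
Qed.

End DetSub.


Section Block.
Variable R : comNzRingType.
Variables (N : nat) (J : finType) (key : 'I_N -> J) (M : 'M[R]_N).
Hypothesis Mblock : forall x y, key x != key y -> M x y = 0.

Definition Eblk (j : J) : 'M[R]_N :=
  \matrix_(x, y) if key x == j then M x y else (x == y)%:R.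
Definition Dblk (s : seq J) : 'M[R]_N :=
  \matrix_(x, y) if key x \in s then M x y else (x == y)%:R.

Lemma Dblk_cons j s : j \notin s -> Dblk (j :: s) = Dblk s *m Eblk j.
Proof.
move=> js; apply/matrixP => x y; rewrite !mxE inE.
case hx: (key x \in s).
  have -> : key x == j = false by apply/negbTE; apply: contraNneq js => <-.
  transitivity ((M *m 1%:M) x y); first by rewrite mulmx1.
  rewrite !mxE; apply: eq_bigr => z _; rewrite !mxE hx.
  case: (key z =P j) => kz; last by [].
  by rewrite Mblock ?mul0r //; rewrite kz; apply: contraTneq hx => ->.
rewrite orbF.
transitivity ((1%:M *m Eblk j) x y); first by rewrite mul1mx mxE.
by rewrite !mxE; apply: eq_bigr => z _; rewrite !mxE hx.
Qed.

Lemma det_Dblk s : uniq s -> \det (Dblk s) = \prod_(j <- s) \det (Eblk j).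
Proof.
elim: s => [|j s IH] /=.
  move=> _; rewrite big_nil -(det1 R N); congr (\det _); apply/matrixP => x y.
  by rewrite !mxE.
move=> /andP [js us]; by rewrite Dblk_cons // det_mulmx IH // big_cons mulrC.
Qed.

Lemma det_block : \det M = \prod_(j : J) \det (Eblk j).
Proof.
rewrite -big_enum /= -det_Dblk ?enum_uniq //; congr (\det _).
by apply/matrixP => x y; rewrite !mxE mem_enum.
Qed.

End Block.


Definition opm {C : Type} {T : finType} (f : T -> T -> C) : 'M[C]_#|T| :=
  \matrix_(a, b) f (enum_val a) (enum_val b).

Section CharBlock.
Variable C : comNzRingType.

Lemma char_poly_diag (T : finType) (g : T -> C) :
  char_poly (opm (fun x y => if x == y then g x else 0)) = \prod_(x : T) ('X - (g x)%:P).
Proof.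
rewrite char_poly_trig; last first.
  apply/is_trig_mxP => i j lij; rewrite !mxE.
  by rewrite (inj_eq enum_val_inj); case: eqP => // eij; rewrite eij ltnn in lij.
rewrite (big_enum_val (fun x => 'X - (g x)%:P)) /=.
by apply: eq_bigr => i _; rewrite !mxE eqxx.
Qed.

Lemma char_poly_block (T J : finType) (f : T * J -> T * J -> C) :
  (forall x y, x.2 != y.2 -> f x y = 0) ->
  char_poly (opm f) = \prod_(j : J) char_poly (opm (fun a b : T => f (a, j) (b, j))).
Proof.
move=> hf.
rewrite /char_poly (det_block (key := fun x => (enum_val x).2)); last first.
  move=> x y kxy; rewrite !mxE.
  have -> : (x == y) = false by apply: contraNF kxy => /eqP ->.
  by rewrite mulr0n hf // subrr.
apply: eq_bigr => j _.
pose h := fun a : 'I_#|T| => enum_rank (enum_val a, j).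
have hi : injective h.
  move=> a b /enum_rank_inj [] /enum_val_inj //.
have hv a : enum_val (h a) = (enum_val a, j) by rewrite /h enum_rankK.
have ncod x : x \notin codom h -> (enum_val x).2 != j.
  apply: contra => /eqP kx; apply/codomP; exists (enum_rank (enum_val x).1).
  by rewrite /h enum_rankK -kx -surjective_pairing enum_valK.
rewrite (@det_sub _ _ _ _ h hi).
- congr (\det _); apply/matrixP => a b; rewrite !mxE !hv /= eqxx (inj_eq hi).
  by [].
- by move=> x y /ncod kx; rewrite !mxE (negbTE kx).
- move=> x y /ncod ky; rewrite !mxE; case: eqP => // kx.
  have -> : (x == y) = false by apply/negbTE; apply: contraNneq ky => <-; apply/eqP.
  by rewrite mulr0n hf ?subrr // kx eq_sym.
Qed.

End CharBlock.


Lemma prod_const_seq (R : comNzRingType) (I : Type) (s : seq I) (c : R) :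
  \prod_(z <- s) c = c ^+ size s.
Proof. by elim: s => [|x s IH]; rewrite ?big_nil ?big_cons ?IH ?exprS. Qed.

Section Scale.
Variable F : fieldType.

Lemma char_poly_scale n (A : 'M[F]_n) (c : F) (s : seq F) : c != 0 ->
  char_poly A = \prod_(z <- s) ('X - z%:P) ->
  char_poly (c *: A) = \prod_(z <- s) ('X - (c * z)%:P).
Proof.
move=> c0 hA.
have sz : size s = n.
  by have := size_char_poly A; rewrite hA size_prod_XsubC => -[].
have key : map_mx (comp_poly (c^-1 *: 'X)) (char_poly_mx A) =
           c^-1%:P *: char_poly_mx (c *: A).
  apply/matrixP => x y; rewrite !mxE.
  rewrite rmorphB rmorphMn /= comp_polyC comp_polyX mulrBr.
  by rewrite -polyCM mulrA mulVf // mul1r mul_polyC -scalerMnr.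
have := det_map_mx (comp_poly (c^-1 *: 'X)) (char_poly_mx A).
rewrite key detZ -/(char_poly A) -/(char_poly (c *: A)) hA rmorph_prod /=.
move=> e.
have -> : char_poly (c *: A) = c%:P ^+ n * (c^-1%:P ^+ n * char_poly (c *: A)).
  by rewrite mulrA -exprMn -polyCM mulfV // expr1n mul1r.
rewrite e -sz -(prod_const_seq s) -big_split /=.
apply: eq_bigr => z _.
rewrite comp_polyB comp_polyC comp_polyX mulrBr mul_polyC scalerA mulfV // scale1r.
by rewrite -polyCM.
Qed.

End Scale.


Section Spec.
Variable R : realType.

Lemma spectrum_prod k (A : 'M[R[i]]_k) :
  char_poly A = \prod_(z <- spectrum A) ('X - z%:P).
Proof.
rewrite /spectrum; set P := (fun s => _).
have : P (xget [::] P); last by [].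
apply: xgetPex; have [s Hs] := closed_field_poly_normal (char_poly A).
by exists s; rewrite /P {1}Hs (monicP (char_poly_monic A)) scale1r.
Qed.

Lemma vN_char k (A : 'M[R[i]]_k) s : char_poly A = \prod_(z <- s) ('X - z%:P) ->
  vN_entropy A = \sum_(z <- s) eta2 (complex.Re z).
Proof.
move=> H; rewrite /vN_entropy; apply: perm_big; apply: prod_XsubC_eq.
by rewrite -spectrum_prod.
Qed.

Lemma op_mxE (T : finType) (f : T -> T -> R[i]) : op_mx f = opm f.
Proof. by []. Qed.

Lemma Sop_ext (T : finType) (f g : T -> T -> R[i]) :
  (forall x y, f x y = g x y) -> Sop f = Sop g.
Proof.
by move=> e; have -> : f = g by apply/funext => x; apply/funext => y; apply: e.
Qed.

Lemma Sop_diag (T : finType) (g : T -> R[i]) :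
  Sop (fun x y : T => if x == y then g x else 0) = \sum_(x : T) eta2 (complex.Re (g x)).
Proof.
rewrite /Sop (@vN_char _ _ [seq g x | x <- enum T]).
  by rewrite big_map big_enum.
by rewrite op_mxE char_poly_diag big_map big_enum.
Qed.

Lemma Sop_block (T J : finType) (f : T * J -> T * J -> R[i]) :
  (forall x y, x.2 != y.2 -> f x y = 0) ->
  Sop f = \sum_(j : J) Sop (fun a b : T => f (a, j) (b, j)).
Proof.
move=> hf.
rewrite /Sop (@vN_char _ _ (flatten [seq spectrum (op_mx (fun a b : T => f (a, j) (b, j))) | j <- enum J])).
  rewrite big_flatten big_map big_enum /=; apply: eq_bigr => j _.
  by rewrite /vN_entropy.
rewrite op_mxE char_poly_block // big_flatten big_map big_enum /=.
by apply: eq_bigr => j _; rewrite -spectrum_prod.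
Qed.

End Spec.


Section PSD.
Variable R : realType.

Definition psdf (T : finType) (f : T -> T -> R[i]) :=
  exists (K : finType) (w : K -> R) (u : K -> T -> R[i]),
    (forall k, 0 <= w k) /\
    forall x y, f x y = \sum_(k : K) (w k)%:C * (u k x * (u k y)^*).

Lemma psd_spec (T : finType) (f : T -> T -> R[i]) : psdf f ->
  forall z, z \in spectrum (op_mx f) -> 0 <= z.
Proof.
move=> [K [w [u [w0 hf]]]] z zs.
have : root (char_poly (op_mx f)) z by rewrite spectrum_prod root_prod_XsubC.
rewrite -eigenvalue_root_char => /eigenvalueP [v hv v0].
pose A := op_mx f.
pose Q := \sum_a \sum_b v 0 a * A a b * ((v 0 b)^*).
pose r := \sum_b v 0 b * ((v 0 b)^*).
have Q1 : Q = z * r.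
  rewrite /Q exchange_big /r mulr_sumr; apply: eq_bigr => b _.
  rewrite -mulr_suml mulrA.
  have := congr1 (fun M : 'rV_(#|T|) => M 0 b) hv; rewrite !mxE => ->.
  by [].
have Q2 : Q = \sum_k (w k)%:C * ((\sum_a v 0 a * u k (enum_val a)) *
                               (\sum_a v 0 a * u k (enum_val a))^*).
  rewrite /Q /A.
  under eq_bigr => a _ do under eq_bigr => b _ do rewrite mxE hf mulr_sumr mulr_suml.
  under eq_bigr => a _ do rewrite exchange_big /=.
  rewrite exchange_big /=; apply: eq_bigr => k _.
  rewrite rmorph_sum /= mulr_suml mulr_sumr; apply: eq_bigr => a _.
  rewrite mulr_sumr mulr_sumr; apply: eq_bigr => b _.
  rewrite rmorphM /=.
  by ring.
have Qge0 : 0 <= Q.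
  rewrite Q2; apply: sumr_ge0 => k _; apply: mulr_ge0.
    by rewrite ler0c.
  exact: mulcJ_ge0.
have rge0 : 0 <= r by apply: sumr_ge0 => b _; exact: mulcJ_ge0.
have rne0 : r != 0.
  apply: contraNneq v0 => /(psumr_eq0P (fun b _ => mulcJ_ge0 (v 0 b))) h.
  apply/eqP/matrixP => i b; rewrite ord1 !mxE.
  by have /eqP := h b isT; rewrite mulf_eq0 conjc_eq0 orbb => /eqP.
have -> : z = Q / r by rewrite Q1 mulfK.
by apply: divr_ge0.
Qed.


Lemma ReD (x y : R[i]) : complex.Re (x + y) = complex.Re x + complex.Re y.
Proof. by case: x => ? ?; case: y. Qed.

Lemma Re_sum (I : Type) (s : seq I) (F : I -> R[i]) :
  complex.Re (\sum_(i <- s) F i) = \sum_(i <- s) complex.Re (F i).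
Proof.
elim: s => [|x s IH]; first by rewrite !big_nil.
by rewrite !big_cons ReD IH.
Qed.

Lemma ReM_real (a : R) (z : R[i]) : complex.Re (a%:C * z) = a * complex.Re z.
Proof. by case: z => x y /=; rewrite mul0r subr0. Qed.

Lemma Re_real (a : R) : complex.Re (a%:C) = a.
Proof. by []. Qed.

Lemma spectrum_sum k (A : 'M[R[i]]_k) : \sum_(z <- spectrum A) z = \tr A.
Proof.
have sz : size (spectrum A) = k.
  by have := size_char_poly A; rewrite spectrum_prod size_prod_XsubC => -[].
case: k A sz => [|k] A sz.
  by move/size0nil: sz => ->; rewrite big_nil /mxtrace big_ord0.
have h1 := char_poly_trace A (ltn0Sn k).
have h2 := @coefPn_prod_XsubC _ (spectrum A); rewrite sz /= in h2.
rewrite spectrum_prod /= h2 // in h1.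
by apply/eqP; rewrite -eqr_opp h1.
Qed.

Lemma eta2_scale (a x : R) : 0 < a -> 0 <= x ->
  eta2 (a * x) = a * eta2 x - a * (ln a / ln 2) * x.
Proof.
move=> a0; rewrite le_eqVlt => /orP [/eqP <-|x0].
  by rewrite /eta2 mulr0 lexx !mulr0 subr0.
rewrite /eta2 leNgt (mulr_gt0 a0 x0) /= [x <= 0]leNgt x0 /= lnM ?posrE //.
by rewrite mulrDl; ring.
Qed.

Lemma Sop_scale (T : finType) (f : T -> T -> R[i]) (a : R) : 0 < a -> psdf f ->
  Sop (fun x y => a%:C * f x y) =
  a * Sop f - a * (ln a / ln 2) * complex.Re (\sum_(x : T) f x x).
Proof.
move=> a0 pf.
have hA : op_mx (fun x y => a%:C * f x y) = a%:C *: op_mx f.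
  by apply/matrixP => i j; rewrite !mxE.
rewrite /Sop hA (@vN_char _ _ _ [seq a%:C * z | z <- spectrum (op_mx f)]); last first.
  rewrite big_map; apply: char_poly_scale; last exact: spectrum_prod.
  by rewrite eq_complex /= negb_and (gt_eqF a0).
rewrite big_map.
transitivity (\sum_(z <- spectrum (op_mx f))
   (a * eta2 (complex.Re z) - a * (ln a / ln 2) * complex.Re z)).
  apply: eq_big_seq => z zs; rewrite ReM_real; apply: eta2_scale => //.
  by have := psd_spec pf zs; rewrite lecE => /andP [].
rewrite sumrB -!mulr_sumr -Re_sum spectrum_sum /vN_entropy.
congr (_ - _ * complex.Re _).
by rewrite /mxtrace (big_enum_val (fun x => f x x)) /=; apply: eq_bigr => i _; rewrite mxE.
Qed.

End PSD.


Section Formulas.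
Variables (R : realType) (m d : nat) (p : 'I_m -> R) (phi : 'I_m -> 'I_d -> R[i]).
Hypothesis hphi : forall i, \sum_(b : 'I_d) phi i b * (phi i b)^* = 1.

Definition SBf (c : 'I_m -> R) : 'I_d -> 'I_d -> R[i] :=
  fun b b' => \sum_i (c i)%:C * (phi i b * (phi i b')^*).
Definition SRf (c : 'I_m -> R) : 'I_m * 'I_d -> 'I_m * 'I_d -> R[i] :=
  fun x y => if x.1 == y.1 then (c x.1)%:C * (phi x.1 x.2 * (phi x.1 y.2)^*) else 0.
Definition G1 (c : 'I_m -> R) : R := eta2 (\sum_i c i) - \sum_i eta2 (c i).
Definition G2 (c : 'I_m -> R) : R :=
  \sum_i eta2 (c i) + Sop (SBf c) - Sop (SRf c) - eta2 (\sum_i c i).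
Definition col n (q : 'I_m -> 'I_n -> R) (j : 'I_n) : 'I_m -> R := fun i => p i * q i j.

Lemma rC_sum (I : Type) (s : seq I) (F : I -> R) :
  (\sum_(i <- s) F i)%:C = \sum_(i <- s) (F i)%:C :> R[i].
Proof. by rewrite rmorph_sum. Qed.

Lemma sum_phi (i : 'I_m) (a : R[i]) :
  \sum_(b : 'I_d) a * (phi i b * (phi i b)^*) = a.
Proof. by rewrite -mulr_sumr hphi mulr1. Qed.

Lemma SopA n (q : 'I_m -> 'I_n -> R) : cond_distr q ->
  Sop (ptrA (rhoABC p phi q)) = \sum_i eta2 (p i).
Proof.
move=> [_ q1].
rewrite (@Sop_ext _ _ _ (fun x y => if x == y then (p x)%:C else 0)).
  by rewrite Sop_diag.
move=> x y; rewrite /ptrA /rhoABC /=.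
case: (x =P y) => [_|_]; last by rewrite big1 // => b _; rewrite big1.
rewrite exchange_big /=.
under eq_bigr => j _ do rewrite eqxx sum_phi.
by rewrite -rC_sum -mulr_sumr q1 mulr1.
Qed.

Lemma SopC n (q : 'I_m -> 'I_n -> R) :
  Sop (ptrC (rhoABC p phi q)) = \sum_j eta2 (\sum_i col q j i).
Proof.
rewrite (@Sop_ext _ _ _ (fun x y => if x == y then (\sum_i col q x i)%:C else 0)).
  by rewrite Sop_diag.
move=> x y; rewrite /ptrC /rhoABC /=.
case: (x =P y) => [_|_]; last by rewrite big1 // => i _; rewrite big1 // => b _; rewrite eqxx.
by rewrite rC_sum; apply: eq_bigr => i _; rewrite eqxx sum_phi.
Qed.

Lemma SopAC n (q : 'I_m -> 'I_n -> R) :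
  Sop (ptrAC (rhoABC p phi q)) = \sum_j \sum_i eta2 (col q j i).
Proof.
rewrite (@Sop_ext _ _ _ (fun x y => if x == y then (col q x.2 x.1)%:C else 0)).
  rewrite Sop_diag -(pair_big xpredT xpredT (fun i j => eta2 (col q j i))) /=; exact: exchange_big.
move=> [x1 x2] [y1 y2]; rewrite /ptrAC /rhoABC /= xpair_eqE.
case: ifP => _; last by rewrite big1.
by rewrite sum_phi.
Qed.

Lemma SopBC n (q : 'I_m -> 'I_n -> R) :
  Sop (ptrBC (rhoABC p phi q)) = \sum_j Sop (SBf (col q j)).
Proof.
rewrite Sop_block.
  apply: eq_bigr => j _; apply: Sop_ext => a b.
  by rewrite /ptrBC /SBf /rhoABC /=; apply: eq_bigr => i _; rewrite !eqxx.
move=> x y nxy; rewrite /ptrBC /rhoABC big1 // => i _.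
by rewrite (negbTE nxy) andbF.
Qed.

Lemma SopABC n (q : 'I_m -> 'I_n -> R) :
  Sop (rhoABC p phi q) = \sum_j Sop (SRf (col q j)).
Proof.
rewrite Sop_block.
  apply: eq_bigr => j _; apply: Sop_ext => a b.
  by rewrite /SRf /rhoABC /= eqxx andbT.
by move=> x y nxy; rewrite /rhoABC (negbTE nxy) andbF.
Qed.

Lemma mutinf_formula n (q : 'I_m -> 'I_n -> R) : cond_distr q ->
  mutinfAC p phi q = \sum_i eta2 (p i) + \sum_j G1 (col q j).
Proof.
move=> hq; rewrite /mutinfAC /= SopA // SopC SopAC /G1 sumrB.
by rewrite addrA.
Qed.

Lemma condmut_formula n (q : 'I_m -> 'I_n -> R) :
  condmutinfABgC p phi q = \sum_j G2 (col q j).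
Proof.
rewrite /condmutinfABgC /= SopAC SopBC SopABC SopC /G2.
by rewrite !sumrB big_split.
Qed.

End Formulas.


Section Homog.
Variables (R : realType) (m d : nat) (phi : 'I_m -> 'I_d -> R[i]).
Hypothesis hphi : forall i, \sum_(b : 'I_d) phi i b * (phi i b)^* = 1.

Lemma rCM (x y : R) : (x * y)%:C = x%:C * y%:C :> R[i].
Proof. exact: rmorphM. Qed.

Lemma psd_SB (c : 'I_m -> R) : (forall i, 0 <= c i) -> psdf (SBf phi c).
Proof. by move=> c0; exists 'I_m, c, phi; split. Qed.

Lemma psd_SR (c : 'I_m -> R) : (forall i, 0 <= c i) -> psdf (SRf phi c).
Proof.
move=> c0; exists 'I_m, c, (fun i x => if x.1 == i then phi i x.2 else 0); split => //.
move=> x y; rewrite /SRf (bigD1 x.1) //= eqxx big1 ?addr0; last first.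
  by move=> i /negbTE; rewrite eq_sym => ->; rewrite !mul0r mulr0.
case: (x.1 =P y.1) => [->|ne]; first by rewrite eqxx.
by rewrite (introF eqP (nesym ne)) rmorph0 !mulr0.
Qed.

Lemma Sop_zero (T : finType) (f : T -> T -> R[i]) : (forall x y, f x y = 0) -> Sop f = 0.
Proof.
move=> f0; rewrite (@Sop_ext _ _ _ (fun x y => if x == y then 0 else 0)).
  by rewrite Sop_diag big1 // => x _; rewrite /eta2 lexx.
by move=> x y; rewrite f0; case: eqP.
Qed.

Lemma eta2_0 : eta2 (0 : R) = 0.
Proof. by rewrite /eta2 lexx. Qed.

Lemma G1_0 : G1 (fun _ : 'I_m => 0 : R) = 0.
Proof.
have e0 : \sum_(i < m) (0:R) = 0 by rewrite big1.
by rewrite /G1 e0 eta2_0 big1 ?subrr // => i _; exact: eta2_0.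
Qed.

Lemma G2_0 : G2 phi (fun _ : 'I_m => 0 : R) = 0.
Proof.
have e0 : \sum_(i < m) (0:R) = 0 by rewrite big1.
rewrite /G2 e0 eta2_0 big1 => [|i _] //.
rewrite (@Sop_zero _ (SBf phi (fun=> 0))) ?(@Sop_zero _ (SRf phi (fun=> 0))).
- by rewrite !addr0 !subr0.
- by move=> x y; rewrite /SRf; case: ifP => // _; rewrite mul0r.
- by move=> x y; rewrite /SBf big1 // => i _; rewrite mul0r.
Qed.

Lemma sum_scale (c : 'I_m -> R) (a : R) : \sum_i a * c i = a * \sum_i c i.
Proof. by rewrite mulr_sumr. Qed.

Lemma sum_eta2_scale (a : R) (c : 'I_m -> R) : 0 < a -> (forall i, 0 <= c i) ->
  \sum_i eta2 (a * c i) = a * \sum_i eta2 (c i) - a * (ln a / ln 2) * \sum_i c i.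
Proof.
move=> a0 c0; rewrite !mulr_sumr -sumrB; apply: eq_bigr => i _.
by rewrite (@eta2_scale R).
Qed.

Lemma G1_scale (a : R) (c : 'I_m -> R) : 0 < a -> (forall i, 0 <= c i) ->
  G1 (fun i => a * c i) = a * G1 c.
Proof.
move=> a0 c0; rewrite /G1 sum_scale (@eta2_scale R) ?sumr_ge0 //.
rewrite sum_eta2_scale //.
ring.
Qed.

Lemma trace_SB (c : 'I_m -> R) : \sum_b SBf phi c b b = (\sum_i c i)%:C.
Proof.
rewrite /SBf exchange_big rC_sum; apply: eq_bigr => i _.
by rewrite -mulr_sumr hphi mulr1.
Qed.

Lemma trace_SR (c : 'I_m -> R) : \sum_x SRf phi c x x = (\sum_i c i)%:C.
Proof.
rewrite /SRf; under eq_bigr => x _ do rewrite eqxx.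
rewrite -(pair_big xpredT xpredT (fun i b => (c i)%:C * (phi i b * (phi i b)^* ))) /=.
rewrite rC_sum; apply: eq_bigr => i _.
by rewrite -mulr_sumr hphi mulr1.
Qed.

Lemma G2_scale (a : R) (c : 'I_m -> R) : 0 < a -> (forall i, 0 <= c i) ->
  G2 phi (fun i => a * c i) = a * G2 phi c.
Proof.
move=> a0 c0; rewrite /G2 sum_scale (@eta2_scale R) ?sumr_ge0 //.
rewrite sum_eta2_scale //.
rewrite (@Sop_ext _ _ (SBf phi (fun i => a * c i)) (fun x y => a%:C * SBf phi c x y)); last first.
  move=> x y; rewrite /SBf mulr_sumr; apply: eq_bigr => i _.
  by rewrite rCM -mulrA.
rewrite (@Sop_ext _ _ (SRf phi (fun i => a * c i)) (fun x y => a%:C * SRf phi c x y)); last first.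
  move=> x y; rewrite /SRf; case: ifP => _; last by rewrite mulr0.
  by rewrite rCM -mulrA.
have p1 := psd_SB c0; have p2 := psd_SR c0.
rewrite (Sop_scale a0 p1) (Sop_scale a0 p2) (trace_SB c) (trace_SR c) /=.
ring.
Qed.

End Homog.


Section LP.
Variable R : realFieldType.

Lemma exists_min (I : finType) (P : pred I) (F : I -> R) k0 : P k0 ->
  exists k, P k /\ forall k', P k' -> F k <= F k'.
Proof.
move=> Pk0; case: (@arg_minP _ R I k0 P F Pk0) => k Pk Hk.
by exists k; split.
Qed.

Lemma sum_restrict (n : nat) (S : {set 'I_n}) (V : zmodType) (F : 'I_n -> V) :
  (forall k, k \notin S -> F k = 0) ->
  \sum_(a < #|S|) F (enum_val a) = \sum_k F k.
Proof.
move=> F0; rewrite -(big_enum_val (A := mem S) F) /=.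
rewrite [RHS](bigID (mem S)) /= [X in _ = _ + X]big1 ?addr0 //.
Qed.

Variables (K N : nat) (v : 'I_N -> 'rV[R]_K) (g w : 'I_N -> R).
Hypothesis vpos : forall j, 0 < \sum_i v j 0 i.

Lemma kernel_vec n (s : 'I_n -> 'I_N) : (K.+1 < n)%N ->
  exists mu : 'I_n -> R, [/\ exists k, mu k != 0,
    \sum_k mu k *: v (s k) = 0 & \sum_k mu k * g (s k) = 0].
Proof.
move=> Kn.
pose M : 'M[R]_(n, K + 1) := row_mx (\matrix_(k, i) v (s k) 0 i) (\col_k g (s k)).
have nf : ~~ row_free M.
  rewrite -row_leq_rank -ltnNge; apply: (leq_ltn_trans (rank_leq_col M)).
  by rewrite addn1.
have : kermx M != 0 by rewrite kermx_eq0.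
case/rowV0Pn => u /sub_kermxP uM u0.
exists (fun k => u 0 k); split.
- apply/existsP; apply: contraNT u0 => /existsPn h.
  by apply/eqP/matrixP => i k; rewrite ord1 mxE; apply/eqP; rewrite -[_ == _]negbK h.
- move: uM; rewrite mul_mx_row => /eqP; rewrite -row_mx0 => /eqP /eq_row_mx [h1 _].
  apply/matrixP => i j; rewrite ord1 summxE.
  transitivity ((u *m \matrix_(k, i) v (s k) 0 i) 0 j); last by rewrite h1 !mxE.
  by rewrite !mxE; apply: eq_bigr => k _; rewrite !mxE.
- move: uM; rewrite mul_mx_row => /eqP; rewrite -row_mx0 => /eqP /eq_row_mx [_ h2].
  transitivity ((u *m \col_k g (s k)) 0 0); last by rewrite h2 !mxE.
  by rewrite !mxE; apply: eq_bigr => k _; rewrite !mxE.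
Qed.


Lemma carath n (s : 'I_n -> 'I_N) (l : 'I_n -> R) : (forall k, 0 < l k) ->
  exists n' (s' : 'I_n' -> 'I_N) (l' : 'I_n' -> R),
   [/\ (n' <= K.+1)%N, (forall k, 0 < l' k),
    \sum_k l' k *: v (s' k) = \sum_k l k *: v (s k),
    \sum_k l' k * g (s' k) = \sum_k l k * g (s k) &
    \sum_k l' k * w (s' k) <= \sum_k l k * w (s k)].
Proof.
elim/ltn_ind: n s l => n IH s l lpos.
case: (leqP n K.+1) => nK.
  by exists n, s, l; split.
have [mu [[k1 mk1] mv mg]] := kernel_vec s nK.
pose b := \sum_k mu k * w (s k) <= 0.
pose sg : R := if b then 1 else -1.
pose nu := fun k => sg * mu k.
have nuv : \sum_k nu k *: v (s k) = 0.
  by rewrite /nu; under eq_bigr => k _ do rewrite -scalerA; rewrite -scaler_sumr mv scaler0.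
have nug : \sum_k nu k * g (s k) = 0.
  by rewrite /nu; under eq_bigr => k _ do rewrite -mulrA; rewrite -mulr_sumr mg mulr0.
have nuw : \sum_k nu k * w (s k) <= 0.
  rewrite /nu; under eq_bigr => k _ do rewrite -mulrA; rewrite -mulr_sumr /sg.
  case: ifP => hb; first by rewrite mul1r.
  by move: hb; rewrite /b => /negbT; rewrite -ltNge mulN1r oppr_le0 => /ltW.
have nu_nz : nu k1 != 0 by rewrite /nu mulf_neq0 // /sg; case: ifP; rewrite ?oppr_eq0 oner_eq0.
have [kn nkn] : exists k, nu k < 0.
  case: (boolP [exists k, nu k < 0]) => [/existsP [k hk]|/existsPn hn].
    by exists k.
  exfalso.
  have hge k : 0 <= nu k by rewrite leNgt hn.
  have P0 : \sum_k nu k * \sum_i v (s k) 0 i = 0.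
    transitivity (\sum_i (\sum_k nu k *: v (s k)) 0 i); last first.
      by rewrite nuv big1 // => i _; rewrite mxE.
    under eq_bigr => k _ do rewrite mulr_sumr.
    rewrite exchange_big /=; apply: eq_bigr => i _.
    by rewrite summxE; apply: eq_bigr => k _; rewrite mxE.
  have := @psumr_eq0P _ _ xpredT (fun k => nu k * \sum_i v (s k) 0 i) (fun k _ => mulr_ge0 (hge k) (ltW (vpos (s k)))) P0 k1 isT.
  by move/eqP; rewrite mulf_eq0 (negbTE nu_nz) (gt_eqF (vpos (s k1))).
have [k0 [nk0 hk0]] := exists_min (P := fun k => nu k < 0) (fun k => l k / - nu k) nkn.
pose t := l k0 / - nu k0.
have t0 : 0 < t by rewrite /t divr_gt0 // ?lpos // oppr_gt0.
pose l2 := fun k => l k + t * nu k.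
have l2ge k : 0 <= l2 k.
  rewrite /l2; case: (ltP (nu k) 0) => hk.
    have := hk0 k hk; rewrite -/t ler_pdivlMr ?oppr_gt0 // => h.
    by rewrite -subr_ge0 in h *; rewrite mulrN opprK in h; rewrite addrC in h *; lra.
  by apply: addr_ge0; [exact: ltW | exact: mulr_ge0 (ltW t0) hk].
have l2k0 : l2 k0 = 0.
  rewrite /l2 /t; have nz : nu k0 != 0 by rewrite lt_eqF.
  by field. 
pose S := [set k | 0 < l2 k].
have Sn : (#|S| < n)%N.
  have : (#|S| <= #|[set~ k0]|)%N.
    apply: subset_leq_card; apply/fintype.subsetP => k; rewrite !inE => hk.
    by apply: contraTneq hk => ->; rewrite l2k0 ltxx.
  rewrite cardsC1 card_ord => h; apply: (leq_ltn_trans h).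
  by rewrite prednK // (ltn_trans _ nK).
have l20 k : k \notin S -> l2 k = 0.
  rewrite inE => /negbTE h; apply/eqP; rewrite eq_le l2ge andbT leNgt h //.
have [n' [s' [l' [n'K l'pos e1 e2 e3]]]] :=
  IH #|S| Sn (fun a => s (enum_val a)) (fun a => l2 (enum_val a))
     (fun a => (let: h := enum_valP a in ltac:(by move: h; rewrite inE))).
exists n', s', l'; split => //.
- rewrite e1 (sum_restrict (F := fun k => l2 k *: v (s k))); last first.
    by move=> k /l20 ->; rewrite scale0r.
  rewrite /l2; under eq_bigr => k _ do rewrite scalerDl -scalerA.
  by rewrite big_split /= -scaler_sumr nuv scaler0 addr0.
- rewrite e2 (sum_restrict (F := fun k => l2 k * g (s k))); last first.
    by move=> k /l20 ->; rewrite mul0r.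
  rewrite /l2; under eq_bigr => k _ do rewrite mulrDl -mulrA.
  by rewrite big_split /= -mulr_sumr nug mulr0 addr0.
- rewrite (le_trans e3) //.
  rewrite (sum_restrict (F := fun k => l2 k * w (s k))); last first.
    by move=> k /l20 ->; rewrite mul0r.
  rewrite /l2; under eq_bigr => k _ do rewrite mulrDl -mulrA.
  rewrite big_split /= -mulr_sumr gerDl.
  by rewrite pmulr_rle0.
Qed.

End LP.


Section Main.
Variables (R : realType) (m d : nat) (p : 'I_m -> R) (phi : 'I_m -> 'I_d -> R[i]).
Hypothesis hp0 : forall i, 0 <= p i.
Hypothesis hp1 : \sum_(i : 'I_m) p i = 1.
Hypothesis hphi : forall i, \sum_(b : 'I_d) phi i b * (phi i b)^* = 1.

Lemma reduce n (q : 'I_m -> 'I_n -> R) : cond_distr q ->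
  exists n' (q' : 'I_m -> 'I_n' -> R),
    [/\ (n' <= m.+1)%N, cond_distr q', mutinfAC p phi q' = mutinfAC p phi q &
        condmutinfABgC p phi q' <= condmutinfABgC p phi q].
Proof.
move=> [q0 q1].
have c0 j i : 0 <= col p q j i by rewrite /col mulr_ge0.
pose P j := \sum_i col p q j i.
pose S0 := [set j | 0 < P j].
have colz j : j \notin S0 -> col p q j = (fun _ => 0).
  rewrite inE -leNgt => hj; apply/funext => i.
  have Pj0 : P j = 0 by apply/eqP; rewrite eq_le hj sumr_ge0.
  exact: (@psumr_eq0P _ _ xpredT (col p q j) (fun i _ => c0 j i) Pj0 i isT).
pose v (a : 'I_#|S0|) : 'rV[R]_m := \row_i col p q (enum_val a) i.
pose g (a : 'I_#|S0|) := G1 (col p q (enum_val a)).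
pose w (a : 'I_#|S0|) := G2 phi (col p q (enum_val a)).
have vpos a : 0 < \sum_i v a 0 i.
  have := enum_valP a; rewrite inE /P => h.
  by under eq_bigr => i _ do rewrite mxE.
have [n' [s' [l' [n'K l'pos E1 E2 E3]]]] :=
  @carath R m #|S0| v g w vpos #|S0| id (fun _ => 1) (fun _ => ltr01).
pose sg k := enum_val (s' k).
have E1i i : \sum_k l' k * col p q (sg k) i = p i.
  have := congr1 (fun M : 'rV[R]_m => M 0 i) E1; rewrite /= !summxE.
  move=> h; transitivity (\sum_(k < n') (l' k *: v (s' k)) 0 i).
    by apply: eq_bigr => k _; rewrite !mxE.
  rewrite h; under eq_bigr => a _ do rewrite scale1r mxE.
  rewrite (sum_restrict (F := fun j => col p q j i)); last by move=> j /colz ->.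
  by rewrite /col -mulr_sumr q1 mulr1.
have n'pos : (0 < n')%N.
  case: (posnP n') => [n0|//].
  have : \sum_i p i = 0.
    rewrite big1 // => i _; rewrite -E1i big1 // => k _.
    by exfalso; move: (ltn_ord k); rewrite [X in (_ < X)%N]n0.
  by rewrite hp1 => /eqP; rewrite oner_eq0.
pose q' (i : 'I_m) (k : 'I_n') : R := if p i == 0 then 1 / n'%:R else l' k * q i (sg k).
have colq' k : col p q' k = (fun i => l' k * col p q (sg k) i).
  apply/funext => i; rewrite /col /q'; case: eqP => [->|_]; first by rewrite !mul0r mulr0.
  by rewrite mulrCA.
have hq' : cond_distr q'.
  split.
    move=> i k; rewrite /q'; case: ifP => _; first by rewrite div1r invr_ge0 ler0n.
    by rewrite mulr_ge0 // ltW.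
  move=> i; rewrite /q'; case: eqP => [_|pi0].
    by rewrite sumr_const card_ord -[_ *+ _]mulr_natr div1r mulVf // pnatr_eq0 -lt0n.
  have pi : p i != 0 by apply/eqP.
  apply: (mulfI pi); rewrite mulr1 mulr_sumr -{2}(E1i i); apply: eq_bigr => k _.
  by rewrite /col mulrCA.
exists n', q'; split => //.
- rewrite !mutinf_formula //; congr (_ + _).
  under eq_bigr => k _ do rewrite colq' G1_scale //.
  rewrite E2; under eq_bigr => a _ do rewrite mul1r.
  apply: (sum_restrict (F := fun j => G1 (col p q j))) => j /colz ->; exact: G1_0.
- rewrite !condmut_formula //.
  under eq_bigr => k _ do rewrite colq' G2_scale //.
  apply: (le_trans E3); under eq_bigr => a _ do rewrite mul1r.
  rewrite (sum_restrict (F := fun j => G2 phi (col p q j))) //.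
  by move=> j /colz ->; exact: G2_0.
Qed.

End Main.

Theorem proposition3p2 (R : realType) (m d : nat) (p : 'I_m -> R)
  (phi : 'I_m -> 'I_d -> R[i]) (Rate : R)
  (hp0 : forall i, 0 <= p i) (hp1 : \sum_(i : 'I_m) p i = 1)
  (hphi : forall i, \sum_(b : 'I_d) phi i b * (phi i b)^* = 1)
  (hR : 0 <= Rate) :
  M_E p phi Rate =
  ereal_inf [set x : \bar R | exists (n : nat) (q : 'I_m -> 'I_n -> R),
    [/\ (n <= m.+1)%N, cond_distr q, mutinfAC p phi q <= Rate &
        x = (condmutinfABgC p phi q)%:E]].
Proof.
apply/eqP; rewrite eq_le; apply/andP; split.
  apply: le_ereal_inf => x [n [q [_ hq hm ->]]].
  by exists n, q; split.
apply: le_ereal_inf_tmp => x [n [q [hq hm ->]]].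
have [n' [q' [n'K hq' e1 e2]]] := reduce hp0 hp1 hphi hq.
apply: ge_ereal_inf; exists (condmutinfABgC p phi q')%:E.
  by exists n', q'; split => //; rewrite e1.
by rewrite lee_fin.
Qed.
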